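(* Let $q,t$ be nonzero complex numbers, neither a root of unity, with $\arg q,\arg t\in[0,2\pi)$. For $h\in\mathbb{C}$ put $D(q,t,h)=\{(r,s)\in\mathbb{Z}_{\ge1}^2: h^2=h_{r,s}^2\}$, where $h_{r,s}=t^{r/2}q^{-s/2}+t^{-r/2}q^{s/2}$. Then $\#D(q,t,h)\le1$ for every $h\in\mathbb{C}$ in each of the following cases: (i) $|q|\ne1$ and either $\log|t|/\log|q|\notin\mathbb{Q}$ or $\arg t-\arg q\cdot\frac{\log|t|}{\log|q|}\notin2\pi\mathbb{Q}$; (ii) $|q|\ne1$, $|t|=1$ and $\arg t\notin2\pi\mathbb{Q}$; (iii) $|q|=1$, $|t|\ne1$ and $\arg q\notin2\pi\mathbb{Q}$.
   Context: Here $h_{r,s}^2=(t^{r}q^{-s})+2+(t^{r}q^{-s})^{-1}$, so $h_{r,s}^2$ does not depend on the choice of square roots $t^{1/2},q^{1/2}$. *)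

(* Defs.v *)
From Stdlib Require Import Reals ZArith.
Open Scope R_scope.

Definition Cplx : Type := (R * R)%type.
Definition C0 : Cplx := (0, 0).
Definition C1 : Cplx := (1, 0).
Definition RtoC (x : R) : Cplx := (x, 0).
Definition Cadd (z w : Cplx) : Cplx := (fst z + fst w, snd z + snd w).
Definition Cmul (z w : Cplx) : Cplx :=
  (fst z * fst w - snd z * snd w, fst z * snd w + snd z * fst w).
Definition Cinv (z : Cplx) : Cplx :=
  let d := fst z * fst z + snd z * snd z in (fst z / d, - snd z / d).
Fixpoint Cpow (z : Cplx) (n : nat) : Cplx :=
  match n with O => C1 | S m => Cmul z (Cpow z m) end.
Definition Cnorm (z : Cplx) : R := sqrt (fst z * fst z + snd z * snd z).

Definition is_arg (z : Cplx) (theta : R) : Prop :=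
  0 <= theta < 2 * PI /\ z = (Cnorm z * cos theta, Cnorm z * sin theta).

Definition root_of_unity (z : Cplx) : Prop := exists n : nat, (0 < n)%nat /\ Cpow z n = C1.

Definition is_rational (x : R) : Prop :=
  exists p d : Z, d <> 0%Z /\ x = IZR p / IZR d.
Definition in_2piQ (x : R) : Prop := exists y : R, is_rational y /\ x = 2 * PI * y.

(* h_{r,s}^2 = (t^r q^{-s}) + 2 + (t^r q^{-s})^{-1} *)
Definition hrs2 (q t : Cplx) (r s : nat) : Cplx :=
  let z := Cmul (Cpow t r) (Cinv (Cpow q s)) in
  Cadd (Cadd z (RtoC 2)) (Cinv z).

Definition inD (q t h : Cplx) (r s : nat) : Prop :=
  (1 <= r)%nat /\ (1 <= s)%nat /\ Cmul h h = hrs2 q t r s.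

(* Main.v *)
Require Import Defs.
From Stdlib Require Import Reals ZArith Lra Lia Psatz Classical.
Require Coquelicot.Complex.
Open Scope R_scope.

Module CC := Coquelicot.Complex.
Module Hlp.
Import Coquelicot.Complex.

Lemma Cmul_eq (z w : Cplx) : Cmul z w = CC.Cmult z w.
Proof. reflexivity. Qed.
Lemma Cadd_eq (z w : Cplx) : Cadd z w = CC.Cplus z w.
Proof. reflexivity. Qed.
Lemma Cinv_eq (z : Cplx) : Defs.Cinv z = CC.Cinv z.
Proof. destruct z as [x y]. unfold Defs.Cinv, CC.Cinv. simpl. rewrite !Rmult_1_r. reflexivity. Qed.
Lemma Cpow_eq (z : Cplx) n : Defs.Cpow z n = CC.Cpow z n.
Proof. induction n as [|n IH]; simpl; [reflexivity| rewrite IH; reflexivity]. Qed.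

Lemma zw_lemma (z w : CC.C) : z <> CC.RtoC 0 -> w <> CC.RtoC 0 ->
  CC.Cplus (CC.Cplus z (CC.RtoC 2)) (CC.Cinv z) = CC.Cplus (CC.Cplus w (CC.RtoC 2)) (CC.Cinv w) ->
  z = w \/ CC.Cmult z w = CC.RtoC 1.
Proof.
  intros Hz Hw E.
  assert (E2 : CC.Cmult (CC.Cminus z w) (CC.Cminus (CC.Cmult z w) (CC.RtoC 1)) = CC.RtoC 0).
  { transitivity (CC.Cmult (CC.Cmult z w) (CC.Cminus (CC.Cplus (CC.Cplus z (CC.RtoC 2)) (CC.Cinv z))
       (CC.Cplus (CC.Cplus w (CC.RtoC 2)) (CC.Cinv w)))).
    - field; auto.
    - rewrite E. ring. }
  destruct (classic (z = w)) as [e|ne]; [left; exact e| right].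
  destruct (classic (CC.Cmult z w = CC.RtoC 1)) as [e|ne2]; [exact e|exfalso].
  apply (CC.Cmult_neq_0 (CC.Cminus z w) (CC.Cminus (CC.Cmult z w) (CC.RtoC 1))); auto.
  - intro H0. apply ne. replace z with (CC.Cplus (CC.Cminus z w) w) by ring. rewrite H0. ring.
  - intro H0. apply ne2. replace (CC.Cmult z w) with (CC.Cplus (CC.Cminus (CC.Cmult z w) (CC.RtoC 1)) (CC.RtoC 1)) by ring.
    rewrite H0. ring.
Qed.

Lemma hrs2_eq q t r s : hrs2 q t r s =
  CC.Cplus (CC.Cplus (CC.Cmult (CC.Cpow t r) (CC.Cinv (CC.Cpow q s))) (CC.RtoC 2))
    (CC.Cinv (CC.Cmult (CC.Cpow t r) (CC.Cinv (CC.Cpow q s)))).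
Proof. unfold hrs2. rewrite !Cinv_eq, !Cpow_eq. reflexivity. Qed.

Lemma nz_frac (t q : CC.C) r s : t <> CC.RtoC 0 -> q <> CC.RtoC 0 ->
  CC.Cmult (CC.Cpow t r) (CC.Cinv (CC.Cpow q s)) <> CC.RtoC 0.
Proof.
  intros Ht Hq Z0.
  assert (Z1 : CC.Cmult (CC.Cmult (CC.Cpow t r) (CC.Cinv (CC.Cpow q s))) (CC.Cpow q s) = CC.Cpow t r)
    by (field; apply CC.Cpow_nz; exact Hq).
  rewrite Z0, CC.Cmult_0_l in Z1. symmetry in Z1. exact (CC.Cpow_nz t r Ht Z1).
Qed.

Definition pol (r a : R) : Cplx := (r * cos a, r * sin a).

Lemma pol_mul r a s b : CC.Cmult (pol r a) (pol s b) = pol (r*s) (a+b).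
Proof. unfold CC.Cmult, pol; simpl. rewrite cos_plus, sin_plus. f_equal; ring. Qed.

Lemma pol_pow r a n : CC.Cpow (pol r a) n = pol (r^n) (INR n * a).
Proof.
  induction n as [|n IH].
  - simpl. unfold pol. rewrite Rmult_0_l, cos_0, sin_0. unfold CC.RtoC. f_equal; ring.
  - simpl CC.Cpow. rewrite IH, pol_mul, S_INR. unfold pol. simpl pow.
    replace (a + (INR n + 1 - 1) * a) with ((INR n + 1) * a) by ring.
    replace (a + INR n * a) with ((INR n + 1) * a) by ring. reflexivity.
Qed.

Lemma pol_eq r a s b : 0 < r -> 0 < s -> pol r a = pol s b ->
  r = s /\ exists k : Z, a - b = 2 * PI * IZR k.
Proof.
  intros Hr Hs E. unfold pol in E. injection E as E1 E2.
  assert (ca := sin2_cos2 a). assert (cb := sin2_cos2 b). unfold Rsqr in ca, cb.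
  assert (Hrs : r = s).
  { assert (Hr2 : r*r = (r*cos a)*(r*cos a) + (r*sin a)*(r*sin a))
      by (transitivity (r*r*(sin a*sin a+cos a*cos a)); [rewrite ca; ring| ring]).
    assert (Hs2 : s*s = (s*cos b)*(s*cos b) + (s*sin b)*(s*sin b))
      by (transitivity (s*s*(sin b*sin b+cos b*cos b)); [rewrite cb; ring| ring]).
    rewrite E1, E2 in Hr2. assert (r * r = s * s) by lra. nra. }
  subst s. split; [reflexivity|].
  assert (C1' : cos a = cos b) by (apply (Rmult_eq_reg_l r); lra).
  assert (S1' : sin a = sin b) by (apply (Rmult_eq_reg_l r); lra).
  assert (Hc : cos (a - b) = 1) by (rewrite cos_minus, C1', S1'; lra).
  assert (Hx : cos (2 * ((a - b)/2)) = 1) by (replace (2 * ((a-b)/2)) with (a-b) by field; exact Hc).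
  rewrite cos_2a_sin in Hx.
  assert (Hs0 : sin ((a-b)/2) = 0) by nra.
  destruct (sin_eq_0_0 _ Hs0) as [k Hk]. exists k. lra.
Qed.

Lemma key r1 a1 r2 a2 A B C D : 0 < r1 -> 0 < r2 ->
  CC.Cmult (CC.Cpow (pol r1 a1) A) (CC.Cpow (pol r2 a2) B) =
  CC.Cmult (CC.Cpow (pol r1 a1) C) (CC.Cpow (pol r2 a2) D) ->
  (INR A - INR C) * ln r1 = (INR D - INR B) * ln r2 /\
  exists k : Z, (INR A - INR C) * a1 - (INR D - INR B) * a2 = 2 * PI * IZR k.
Proof.
  intros H1 H2 E. rewrite !pol_pow, !pol_mul in E.
  apply pol_eq in E; try (apply Rmult_lt_0_compat; apply pow_lt; assumption).
  destruct E as [E [k Hk]]. split.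
  - assert (L : ln (r1 ^ A * r2 ^ B) = ln (r1 ^ C * r2 ^ D)) by (rewrite E; reflexivity).
    rewrite !ln_mult, !ln_pow in L by (try apply pow_lt; assumption). lra.
  - exists k. rewrite <- Hk. ring.
Qed.

Lemma IZR_nz_mul (b : Z) (l : R) : l <> 0 -> IZR b * l = 0 -> b = 0%Z.
Proof.
  intros Hl E. destruct (Z.eq_dec b 0) as [e|n]; [exact e|exfalso].
  apply not_0_IZR in n. apply (Rmult_integral_contrapositive_currified _ _ n Hl). exact E.
Qed.

Lemma num (lt lq at' aq : R) (a b k : Z) :
  (lq <> 0 /\ (~ is_rational (lt/lq) \/ ~ in_2piQ (at' - aq*(lt/lq))))
  \/ (lq <> 0 /\ lt = 0 /\ ~ in_2piQ at')
  \/ (lq = 0 /\ lt <> 0 /\ ~ in_2piQ aq) ->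
  IZR a * lt = IZR b * lq -> IZR a * at' - IZR b * aq = 2 * PI * IZR k ->
  a = 0%Z /\ b = 0%Z.
Proof.
  intros Hc E1 E2.
  destruct Hc as [[Hq Hor]|[[Hq [Ht Hn]]|[Hq [Ht Hn]]]].
  - destruct (Z.eq_dec a 0) as [ea|na].
    + subst a. split; [reflexivity|]. apply (IZR_nz_mul b lq Hq). rewrite <- E1. ring.
    + exfalso. apply not_0_IZR in na.
      assert (R1 : lt / lq = IZR b / IZR a) by (field_simplify_eq; [lra| split; assumption]).
      destruct Hor as [Hr|Hr]; apply Hr.
      * exists b, a. split; [intro; subst; apply na; reflexivity| exact R1].
      * exists (IZR k / IZR a). split.
        { exists k, a. split; [intro; subst; apply na; reflexivity| reflexivity]. }
        rewrite R1. field_simplify_eq; [|assumption]. lra.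
  - subst lt. assert (eb : b = 0%Z) by (apply (IZR_nz_mul b lq Hq); lra). subst b.
    split; [|reflexivity].
    destruct (Z.eq_dec a 0) as [ea|na]; [exact ea|exfalso]. apply not_0_IZR in na.
    apply Hn. exists (IZR k / IZR a). split.
    { exists k, a. split; [intro; subst; apply na; reflexivity| reflexivity]. }
    field_simplify_eq; [|assumption]. lra.
  - subst lq. assert (ea : a = 0%Z) by (apply (IZR_nz_mul a lt Ht); lra). subst a.
    split; [reflexivity|].
    destruct (Z.eq_dec b 0) as [eb|nb]; [exact eb|exfalso]. apply not_0_IZR in nb.
    apply Hn. exists (- IZR k / IZR b). split.
    { exists (- k)%Z, b. split; [intro; subst; apply nb; reflexivity| rewrite opp_IZR; reflexivity]. }
    field_simplify_eq; [|assumption]. lra.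
Qed.

Lemma Cnorm_pos (z : Cplx) : z <> C0 -> 0 < Cnorm z.
Proof.
  intro H. destruct z as [x y]. unfold Cnorm; simpl. apply sqrt_lt_R0.
  destruct (Req_dec x 0) as [ex|nx]; [destruct (Req_dec y 0) as [ey|ny]|].
  - subst. exfalso. apply H. reflexivity.
  - nra.
  - nra.
Qed.

Lemma INR_sub (m n : nat) : INR m - INR n = IZR (Z.of_nat m - Z.of_nat n).
Proof. rewrite minus_IZR, <- !INR_IZR_INZ. reflexivity. Qed.

Lemma core (q t : Defs.Cplx) (argq argt : R) :
  q <> Defs.C0 -> t <> Defs.C0 ->
  ~ Defs.root_of_unity q -> ~ Defs.root_of_unity t ->
  Defs.is_arg q argq -> Defs.is_arg t argt ->
  ( (Defs.Cnorm q <> 1 /\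
       (~ Defs.is_rational (ln (Defs.Cnorm t) / ln (Defs.Cnorm q)) \/
        ~ Defs.in_2piQ (argt - argq * (ln (Defs.Cnorm t) / ln (Defs.Cnorm q)))))
    \/ (Defs.Cnorm q <> 1 /\ Defs.Cnorm t = 1 /\ ~ Defs.in_2piQ argt)
    \/ (Defs.Cnorm q = 1 /\ Defs.Cnorm t <> 1 /\ ~ Defs.in_2piQ argq) ) ->
  forall (h : Defs.Cplx) (r1 s1 r2 s2 : nat),
    Defs.inD q t h r1 s1 -> Defs.inD q t h r2 s2 -> r1 = r2 /\ s1 = s2.
Proof.
  intros Hq Ht _ _ [_ Pq] [_ Pt] Hcase h r1 s1 r2 s2 [Hr1 [Hs1 E1]] [Hr2 [Hs2 E2]].
  assert (pq := Cnorm_pos q Hq). assert (pt := Cnorm_pos t Ht).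
  assert (Hc : (ln (Cnorm q) <> 0 /\ (~ is_rational (ln (Cnorm t) / ln (Cnorm q)) \/
        ~ in_2piQ (argt - argq * (ln (Cnorm t) / ln (Cnorm q)))))
    \/ (ln (Cnorm q) <> 0 /\ ln (Cnorm t) = 0 /\ ~ in_2piQ argt)
    \/ (ln (Cnorm q) = 0 /\ ln (Cnorm t) <> 0 /\ ~ in_2piQ argq)).
  { destruct Hcase as [[a b]|[[a [b c]]|[a [b c]]]].
    - left. split; [apply ln_neq_0; assumption| exact b].
    - right; left. rewrite b, ln_1. split; [apply ln_neq_0; assumption| split; [reflexivity|exact c]].
    - right; right. rewrite a, ln_1. split; [reflexivity| split; [apply ln_neq_0; assumption|exact c]]. }
  clear Hcase.
  assert (Hq' : q <> CC.RtoC 0) by exact Hq.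
  assert (Ht' : t <> CC.RtoC 0) by exact Ht.
  rewrite !hrs2_eq in E1, E2. rewrite E1 in E2. clear E1.
  assert (nzt := CC.Cpow_nz t). assert (nzq := CC.Cpow_nz q).
  apply zw_lemma in E2.
  2,3: apply nz_frac; assumption.

  destruct E2 as [E|E].
  - assert (F : CC.Cmult (CC.Cpow t r1) (CC.Cpow q s2) = CC.Cmult (CC.Cpow t r2) (CC.Cpow q s1)).
    { transitivity (CC.Cmult (CC.Cmult (CC.Cpow t r1) (CC.Cinv (CC.Cpow q s1)))
                        (CC.Cmult (CC.Cpow q s1) (CC.Cpow q s2))).
      - field. apply nzq; exact Hq'.
      - rewrite E. field. apply nzq; exact Hq'. }
    rewrite Pt, Pq in F. fold (pol (Cnorm t) argt) (pol (Cnorm q) argq) in F.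
    apply key in F; try assumption. destruct F as [F1 [k F2]].
    rewrite !INR_sub in F1, F2.
    destruct (num _ _ _ _ _ _ _ Hc F1 F2) as [Z1 Z2]. split; lia.
  - assert (F : CC.Cmult (CC.Cpow t (r1 + r2)) (CC.Cpow q 0) = CC.Cmult (CC.Cpow t 0) (CC.Cpow q (s1 + s2))).
    { rewrite !CC.Cpow_add_r. simpl CC.Cpow.
      transitivity (CC.Cmult (CC.Cmult (CC.Cmult (CC.Cpow t r1) (CC.Cinv (CC.Cpow q s1)))
                        (CC.Cmult (CC.Cpow t r2) (CC.Cinv (CC.Cpow q s2))))
                        (CC.Cmult (CC.Cpow q s1) (CC.Cpow q s2))).
      - field. split; apply nzq; exact Hq'.
      - rewrite E. ring. }
    rewrite Pt, Pq in F. fold (pol (Cnorm t) argt) (pol (Cnorm q) argq) in F.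
    apply key in F; try assumption. destruct F as [F1 [k F2]].
    rewrite !INR_sub in F1, F2.
    destruct (num _ _ _ _ _ _ _ Hc F1 F2) as [Z1 Z2]. lia.
Qed.

End Hlp.

Theorem lemmaA7 (q t : Cplx) (argq argt : R) :
  q <> C0 -> t <> C0 ->
  ~ root_of_unity q -> ~ root_of_unity t ->
  is_arg q argq -> is_arg t argt ->
  ( (Cnorm q <> 1 /\
       (~ is_rational (ln (Cnorm t) / ln (Cnorm q)) \/
        ~ in_2piQ (argt - argq * (ln (Cnorm t) / ln (Cnorm q)))))
    \/ (Cnorm q <> 1 /\ Cnorm t = 1 /\ ~ in_2piQ argt)
    \/ (Cnorm q = 1 /\ Cnorm t <> 1 /\ ~ in_2piQ argq) ) ->
  forall (h : Cplx) (r1 s1 r2 s2 : nat),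
    inD q t h r1 s1 -> inD q t h r2 s2 -> r1 = r2 /\ s1 = s2.
Proof. exact (Hlp.core q t argq argt). Qed.
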